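(* Let $\mathbb{A}$ be a Boolean algebra with the Grothendieck property and $(\mathbb{B},\mu)$ a metric Boolean algebra. If a sequence $(\varphi_n)$ in $\mathcal{H}(\mathbb{A},\mathbb{B})$ converges pointwise metric to $\varphi\in\mathcal{H}(\mathbb{A},\mathbb{B})$, then $(\varphi_n)$ converges pointwise Borel metric to $\varphi$.
   Context: $\mathbb{A}$ has the Grothendieck property if every weak* convergent sequence of (signed) Radon measures on the Stone space $St(\mathbb{A})$ is weakly convergent (weak* with respect to $C(St(\mathbb{A}))$, weak in $C(St(\mathbb{A}))^*$). A metric Boolean algebra $(\mathbb{B},\mu)$ is a Boolean algebra with a strictly positive finitely additive probability measure $\mu$; $d_\mu(A,B)=\mu(A\triangle B)$. $\mathcal{H}(\mathbb{A},\mathbb{B})$ is the set of homomorphisms $\mathbb{A}\to\mathbb{B}$. Algebras are identified with the clopen algebras of their Stone spaces; $\widehat{\mu}$ is the Radon extension of $\mu$ to $St(\mathbb{B})$; $f_\varphi\colon St(\mathbb{B})\to St(\mathbb{A})$, $f_\varphi(x)=\varphi^{-1}[x]$. Pointwise metric convergence: $d_\mu(\varphi_n(A),\varphi(A))\to0$ for each $A\in\mathbb{A}$. Pointwise Borel metric convergence: $\widehat{\mu}(f_{\varphi_n}^{-1}[B]\triangle f_\varphi^{-1}[B])\to0$ for every Borel $B\subseteq St(\mathbb{A})$. *)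

(* Defs.v *)
From HB Require Import structures.
From mathcomp Require Import all_boot all_order all_algebra.
From mathcomp Require Import all_classical all_reals all_analysis.
Set Implicit Arguments. Unset Strict Implicit. Unset Printing Implicit Defensive.
Import Order.LTheory GRing.Theory Num.Theory.
Import numFieldNormedType.Exports.
Local Open Scope classical_set_scope.
Local Open Scope ring_scope.

(** * Boolean algebras
   A Boolean algebra is a complemented distributive lattice with top and
   bottom, i.e. a [ctbDistrLatticeType d] of MathComp's order library. *)

Section BooleanAlgebra.
Context {d : Order.disp_t} (A : ctbDistrLatticeType d).

Definition ultrafilter (u : set A) : Prop :=
  [/\ u Order.top, ~ u Order.bottom,
      (forall a b : A, u a -> (a <= b)%O -> u b),
      (forall a b : A, u a -> u b -> u (Order.meet a b)) &
      (forall a : A, u a \/ u (Order.compl a))].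

Record stone := Stone { uf :> set A ; ufP : ultrafilter uf }.

HB.instance Definition _ := gen_eqMixin stone.
HB.instance Definition _ := gen_choiceMixin stone.

Definition sclopen (a : A) : set stone := [set x | uf x a].

Definition stone_base (i : option A) : set stone :=
  if i is Some a then sclopen a else set0.

Lemma stone_base_cover :
  \bigcup_(i in range (@Some A)) stone_base i = setT.
Proof.
apply/seteqP; split => // x _; exists (Some Order.top); first by exists Order.top.
by case: (ufP x).
Qed.

Lemma stone_base_join (i j : option A) (t : stone) :
  range (@Some A) i -> range (@Some A) j -> stone_base i t -> stone_base j t ->
  exists k, [/\ range (@Some A) k, stone_base k t &
                stone_base k `<=` stone_base i `&` stone_base j].
Proof.
move=> [a _ <-] [b _ <-] /= ha hb.
exists (Some (Order.meet a b)); split => //=.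
- by exists (Order.meet a b).
- by case: (ufP t) => _ _ _ + _; apply.
- move=> x /= hx; case: (ufP x) => _ _ up _ _; split.
  + by apply: (up _ _ hx); rewrite leIl.
  + by apply: (up _ _ hx); rewrite leIr.
Qed.

HB.instance Definition _ :=
  isBaseTopological.Build stone stone_base_cover stone_base_join.

(** A copy of St(A) made pointed by a given point [x0]; this is only needed
   because MathComp-Analysis measurable types must be pointed.  The point
   plays no mathematical role (same topology, same Borel sets). *)
Definition pstone (x0 : stone) : Type := stone.
HB.instance Definition _ (x0 : stone) := Choice.on (pstone x0).
HB.instance Definition _ (x0 : stone) := isPointed.Build (pstone x0) x0.
HB.instance Definition _ (x0 : stone) :=
  @isBaseTopological.Build (pstone x0) _ _ stone_base stone_base_cover
    stone_base_join.

Definition borel_stone : set (set stone) := <<s (@open stone) >>.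

Definition bstone (x0 : stone) := g_sigma_algebraType (@open (pstone x0)).

End BooleanAlgebra.

Section Radon.
Context {d : Order.disp_t} (A : ctbDistrLatticeType d) (x0 : stone A)
  (R : realType).

Local Notation T := (bstone x0).

Definition finite_radon (m : {measure set T -> \bar R}) : Prop :=
  (m setT < +oo)%E /\
  forall B : set T, measurable B -> forall e : R, 0 < e ->
    exists K : set (pstone x0),
      [/\ @compact (pstone x0) K, K `<=` B & (m B <= m K + e%:E)%E].

Definition sdiff_meas (m1 m2 : {measure set T -> \bar R}) : set T -> R :=
  fun B => fine (m1 B) - fine (m2 B).

(** Signed Radon measures: differences of two finite Radon measures
   (Jordan decomposition). *)
Definition signed_radon (nu : set T -> R) : Prop :=
  exists m1 m2 : {measure set T -> \bar R},
    [/\ finite_radon m1, finite_radon m2 & nu = sdiff_meas m1 m2].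

Definition total_variation (nu : set T -> R) : R :=
  sup [set r : R | exists (k : nat) (F : nat -> set T),
         [/\ (forall i, measurable (F i)),
             (forall i j, (i < k)%N -> (j < k)%N -> i <> j -> F i `&` F j = set0)
           & r = \sum_(i < k) `|nu (F i)|]].

(** Continuous linear functionals on the space M(St(A)) = C(St(A))^* of
   signed Radon measures with the total variation norm. *)
Definition bounded_linear_functional (Phi : (set T -> R) -> R) : Prop :=
  (forall (nu nu' : set T -> R) (a b : R), signed_radon nu -> signed_radon nu' ->
     Phi (fun B => a * nu B + b * nu' B) = a * Phi nu + b * Phi nu') /\
  exists C : R, forall nu, signed_radon nu -> `|Phi nu| <= C * total_variation nu.

Definition sintegral (m1 m2 : {measure set T -> \bar R}) (f : pstone x0 -> R) : R :=
  fine (\int[m1]_x (f x)%:E) - fine (\int[m2]_x (f x)%:E).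

Definition weakstar_cvg (m1 m2 : nat -> {measure set T -> \bar R})
  (l1 l2 : {measure set T -> \bar R}) : Prop :=
  forall f : pstone x0 -> R, continuous f ->
    (fun n => sintegral (m1 n) (m2 n) f) @ \oo --> sintegral l1 l2 f.

Definition weak_cvg (m1 m2 : nat -> {measure set T -> \bar R})
  (l1 l2 : {measure set T -> \bar R}) : Prop :=
  forall Phi, bounded_linear_functional Phi ->
    (fun n => Phi (sdiff_meas (m1 n) (m2 n))) @ \oo --> Phi (sdiff_meas l1 l2).

End Radon.

(** A signed Radon measure is
   given by a Jordan-type decomposition into two finite Radon measures; the
   quantification over the point x0 is vacuous if St(A) is empty (then the
   only measure is 0 and the property holds trivially). *)
Definition grothendieck (R : realType) {d : Order.disp_t}
  (A : ctbDistrLatticeType d) : Prop :=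
  forall (x0 : stone A)
    (m1 m2 : nat -> {measure set bstone x0 -> \bar R})
    (l1 l2 : {measure set bstone x0 -> \bar R}),
    (forall n, finite_radon (m1 n)) -> (forall n, finite_radon (m2 n)) ->
    finite_radon l1 -> finite_radon l2 ->
    weakstar_cvg m1 m2 l1 l2 -> weak_cvg m1 m2 l1 l2.

Definition bool_hom {dA dB : Order.disp_t} {A : ctbDistrLatticeType dA}
  {B : ctbDistrLatticeType dB} (phi : A -> B) : Prop :=
  [/\ forall a b, phi (Order.meet a b) = Order.meet (phi a) (phi b),
      forall a b, phi (Order.join a b) = Order.join (phi a) (phi b),
      forall a, phi (Order.compl a) = Order.compl (phi a),
      phi Order.top = Order.top &
      phi Order.bottom = Order.bottom].

Definition metric_BA {dB : Order.disp_t} {B : ctbDistrLatticeType dB}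
  {R : realType} (mu : B -> R) : Prop :=
  [/\ forall a b : B, Order.meet a b = Order.bottom ->
        mu (Order.join a b) = mu a + mu b,
      mu Order.top = 1 &
      forall a : B, a <> Order.bottom -> 0 < mu a].

Definition symdiff {d : Order.disp_t} {B : ctbDistrLatticeType d} (a b : B) : B :=
  Order.join (Order.diff a b) (Order.diff b a).

Definition d_mu {dB : Order.disp_t} {B : ctbDistrLatticeType dB}
  {R : realType} (mu : B -> R) (a b : B) : R := mu (symdiff a b).

Definition pointwise_metric_cvg {dA dB : Order.disp_t}
  {A : ctbDistrLatticeType dA} {B : ctbDistrLatticeType dB} {R : realType}
  (mu : B -> R) (phis : nat -> A -> B) (phi : A -> B) : Prop :=
  forall a : A, (fun n => d_mu mu (phis n a) (phi a)) @ \oo --> (0 : R).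

(** f_phi^{-1}[S] for f_phi : St(B) -> St(A), f_phi(x) = phi^{-1}[x]. *)
Definition fphi_preimage {dA dB : Order.disp_t}
  {A : ctbDistrLatticeType dA} {B : ctbDistrLatticeType dB}
  (phi : A -> B) (S : set (stone A)) : set (stone B) :=
  [set x | exists y : stone A, S y /\ uf y = [set a | uf x (phi a)]].

(* Main.v *)
Require Import Defs.
From HB Require Import structures.
From mathcomp Require Import all_boot all_order all_algebra.
From mathcomp Require Import all_classical all_reals all_analysis.
From mathcomp Require Import measurable_realfun.
From mathcomp Require Import ring lra.
Import Order.TTheory GRing.Theory Num.Theory.
Import numFieldNormedType.Exports.
Local Open Scope classical_set_scope.
Local Open Scope ring_scope.

Import Order.TTheory Order.CTBDistrLatticeTheory GRing.Theory Num.Theory.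
Import numFieldNormedType.Exports.
Local Open Scope classical_set_scope.
Local Open Scope ring_scope.
Set Implicit Arguments.

Section UF.
Context {d : Order.disp_t} (A : ctbDistrLatticeType d).
Implicit Types (x y : stone A) (a b : A).

Lemma uf_top x : uf x Order.top. Proof. by case: (ufP x). Qed.
Lemma uf_bot x : ~ uf x Order.bottom. Proof. by case: (ufP x). Qed.
Lemma uf_up x a b : uf x a -> (a <= b)%O -> uf x b.
Proof. by case: (ufP x) => _ _ h _ _; apply: h. Qed.
Local Arguments uf_up {x a b}.

Lemma uf_meet x a b : uf x (Order.meet a b) <-> uf x a /\ uf x b.
Proof.
split; first by move=> h; split; apply: (uf_up h); rewrite ?leIl ?leIr.
by case=> ha hb; case: (ufP x) => _ _ _ h _; apply: h.
Qed.
Lemma uf_compl x a : uf x (Order.compl a) <-> ~ uf x a.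
Proof.
split.
  move=> hc ha; apply: (uf_bot x); rewrite -(meetxC a); exact/uf_meet.
by move=> na; case: (ufP x) => _ _ _ _ /(_ a) [].
Qed.
Lemma uf_join x a b : uf x (Order.join a b) <-> uf x a \/ uf x b.
Proof.
split; last by case=> h; apply: (uf_up h); rewrite ?leUl ?leUr.
move=> h; apply: contrapT => /not_orP [na nb].
have : uf x (Order.compl (Order.join a b)).
  by rewrite complU; apply/uf_meet; split; apply/uf_compl.
by move/uf_compl.
Qed.

Lemma stone_ext x y : uf x = uf y -> x = y.
Proof.
case: x y => u pu [v pv] /= e; subst v; congr Stone; exact: Prop_irrelevance.
Qed.

Lemma sclopenI a b : sclopen (Order.meet a b) = sclopen a `&` sclopen b.
Proof. by apply/seteqP; split => x; rewrite /sclopen /= => /uf_meet. Qed.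
Lemma sclopenU a b : sclopen (Order.join a b) = sclopen a `|` sclopen b.
Proof. by apply/seteqP; split => x; rewrite /sclopen /= => /uf_join. Qed.
Lemma sclopenC a : sclopen (Order.compl a) = ~` sclopen a.
Proof. by apply/seteqP; split => x; rewrite /sclopen /= => /uf_compl. Qed.
Lemma sclopenT : sclopen (Order.top : A) = setT.
Proof. by apply/seteqP; split => x //= _; apply: uf_top. Qed.
Lemma sclopen0 : sclopen (Order.bottom : A) = set0.
Proof. by apply/seteqP; split => x //=; apply: uf_bot. Qed.
Lemma sclopenD a b : sclopen (Order.diff a b) = sclopen a `\` sclopen b.
Proof. by rewrite diffE sclopenI sclopenC. Qed.
Lemma sclopen_symdiff a b :
  sclopen (symdiff a b) = (sclopen a `\` sclopen b) `|` (sclopen b `\` sclopen a).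
Proof. by rewrite /symdiff sclopenU !sclopenD. Qed.

Lemma open_stoneP (U : set (stone A)) : open U ->
  forall x, U x -> exists a, uf x a /\ sclopen a `<=` U.
Proof.
move=> [D' sD' <-] x [[a|] Da /= xa]; last by [].
by exists a; split => // y ya; exists (Some a).
Qed.

Lemma open_sclopen a : open (sclopen a).
Proof.
exists [set Some a]; first by move=> _ ->; exists a.
by rewrite bigcup_set1.
Qed.

Lemma closed_sclopen a : closed (sclopen a).
Proof.
have -> : sclopen a = ~` sclopen (Order.compl a) by rewrite sclopenC setCK.
by apply: open_closedC; exact: open_sclopen.
Qed.

Lemma stone_hausdorff : hausdorff_space (stone A).
Proof.
rewrite open_hausdorff => x y /eqP nxy.
have [a [xa nya]] : exists a, uf x a /\ ~ uf y a.
  apply: contrapT => H; apply: nxy; apply: stone_ext.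
  apply/seteqP; split => a ha.
    by apply: contrapT => nya; apply: H; exists a.
  apply: contrapT => nxa; apply: H; exists (Order.compl a); split.
    exact/uf_compl.
  by move/uf_compl; apply.
exists (sclopen a, sclopen (Order.compl a)); first by rewrite !inE; split => //=; apply/uf_compl.
split; [exact: open_sclopen|exact: open_sclopen|].
by rewrite sclopenC setICr.
Qed.

Lemma stone_compact : compact [set: stone A].
Proof.
rewrite compact_ultra => F FU _.
pose u := [set a : A | F (sclopen a)].
have uU : ultrafilter u.
  split.
  - by rewrite /u /= sclopenT; exact: filterT.
  - by rewrite /u /= sclopen0; exact: filter_not_empty.
  - move=> a b Fa ab; apply: filterS Fa => x xa; exact: uf_up xa ab.
  - by move=> a b Fa Fb; rewrite /u /= sclopenI; exact: filterI.
  - move=> a; rewrite /u /= sclopenC; exact: in_ultra_setVsetC.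
exists (Stone uU); split => //.
move=> U /=; rewrite nbhsE => -[V [oV V0] VU].
have [a [ua aV]] := @open_stoneP V oV _ V0.
by apply: (filterS VU); apply: (filterS aV).
Qed.

End UF.
Arguments uf_up {d A x a b}.

Import Order.TTheory Order.CTBDistrLatticeTheory GRing.Theory Num.Theory.
Import numFieldNormedType.Exports.
Local Open Scope classical_set_scope.
Local Open Scope ring_scope.
Set Implicit Arguments.

Section Hom.
Context {dA dB : Order.disp_t} (A : ctbDistrLatticeType dA) (B : ctbDistrLatticeType dB).
Variables (phi : A -> B) (hphi : bool_hom phi).

Lemma fhomP (x : stone B) : ultrafilter [set a : A | uf x (phi a)].
Proof.
case: hphi => hI hU hC hT h0; split => /=.
- by rewrite hT; exact: uf_top.
- by rewrite h0; exact: uf_bot.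
- move=> a b xa ab; apply: (uf_up xa).
  by rewrite -(meet_idPl ab) hI leIr.
- by move=> a b xa xb; rewrite hI; apply/uf_meet.
- by move=> a; rewrite hC; case: (ufP x) => _ _ _ _; apply.
Qed.

Definition fhom (x : stone B) : stone A := Stone (fhomP x).

Lemma fphi_preimageE S : fphi_preimage phi S = fhom @^-1` S.
Proof.
apply/seteqP; split => x /=.
  by move=> [y [Sy e]]; have -> : fhom x = y by apply: stone_ext.
by move=> Sx; exists (fhom x).
Qed.

Lemma fhom_sclopen a : fhom @^-1` sclopen a = sclopen (phi a).
Proof. by []. Qed.

Lemma fhom_open U : open U -> open (fhom @^-1` U).
Proof.
move=> [D' sD' <-]; rewrite preimage_bigcup; apply: bigcup_open => i Di.
have [a _ <-] := sD' _ Di; exact: open_sclopen.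
Qed.

Lemma fhom_continuous : continuous fhom.
Proof. by apply/continuousP => U; exact: fhom_open. Qed.

End Hom.

Import Order.TTheory Order.CTBDistrLatticeTheory GRing.Theory Num.Theory.
Import numFieldNormedType.Exports.
Local Open Scope classical_set_scope.
Local Open Scope ring_scope.
Set Implicit Arguments.

Section Push.
Context d1 d2 (T1 : measurableType d1) (T2 : measurableType d2) (R : realType).
Variables (m : {measure set T1 -> \bar R}) (f : T1 -> T2) (mf : measurable_fun setT f).

Definition pushm (_ : measurable_fun setT f) : set T2 -> \bar R := pushforward m f.

Let p0 : pushm mf set0 = 0%E.
Proof. by rewrite /pushm /pushforward preimage_set0 measure0. Qed.
Let pge0 X : (0 <= pushm mf X)%E.
Proof. exact: measure_ge0. Qed.
Let psigma : semi_sigma_additive (pushm mf).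
Proof.
move=> F mF tF mUF; rewrite /pushm /pushforward preimage_bigcup.
apply: measure_semi_sigma_additive.
- by move=> n; rewrite -[X in measurable X]setTI; exact: mf.
- apply/trivIsetP => /= i j _ _ ij; rewrite -preimage_setI.
  by move/trivIsetP : tF => /(_ _ _ _ _ ij) ->//; rewrite preimage_set0.
- by rewrite -preimage_bigcup -[X in measurable X]setTI; exact: mf.
Qed.

HB.instance Definition _ := isMeasure.Build _ _ _ (pushm mf) p0 pge0 psigma.
End Push.

Section Meas.
Context {dA dB : Order.disp_t} (A : ctbDistrLatticeType dA) (B : ctbDistrLatticeType dB).

Lemma fhom_measurable (phi : A -> B) (hphi : bool_hom phi) (x0 : stone B) (xA : stone A) :
  measurable_fun (T := bstone x0) (U := bstone xA) setT (fhom hphi).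
Proof.
apply: (@measurability _ _ (bstone x0) (bstone xA) setT (fhom hphi) (@open (pstone xA))) => //.
move=> _ [U oU <-]; apply: sub_sigma_algebra; rewrite setTI.
exact: fhom_open.
Qed.

End Meas.

Import Order.TTheory Order.CTBDistrLatticeTheory GRing.Theory Num.Theory.
Import numFieldNormedType.Exports.
Local Open Scope classical_set_scope.
Local Open Scope ring_scope.
Set Implicit Arguments.

Lemma compact_measurable_stone {d} (A : ctbDistrLatticeType d) (x : stone A)
  (K : set (pstone x)) : compact K -> measurable (K : set (bstone x)).
Proof.
move=> cK; have cl : closed K.
  apply: compact_closed => //; exact: stone_hausdorff.
rewrite -[K]setCK; apply: measurableC; apply: sub_sigma_algebra.
exact: closed_openC.
Qed.

Section Radon.
Context {dA dB : Order.disp_t} (A : ctbDistrLatticeType dA) (B : ctbDistrLatticeType dB).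
Context (R : realType) (x0 : stone B) (xA : stone A)
  (muhat : {measure set bstone x0 -> \bar R}).
Variables (phi : A -> B) (hphi : bool_hom phi).

Definition nuD (D : set (bstone x0)) (mD : measurable D) :
  {measure set bstone xA -> \bar R} :=
  pushm (mrestr muhat mD) (fhom_measurable (x0:=x0) (xA:=xA) hphi).

Lemma nuDE D (mD : measurable D) S : nuD mD S = muhat (fhom hphi @^-1` S `&` D).
Proof. by []. Qed.

Lemma mpre S : measurable (S : set (bstone xA)) ->
  measurable (fhom hphi @^-1` S : set (bstone x0)).
Proof.
move=> mS; rewrite -[X in measurable X]setTI.
exact: (fhom_measurable (x0:=x0) (xA:=xA) hphi measurableT mS).
Qed.

Lemma nuD_radon D (mD : measurable D) : finite_radon muhat -> finite_radon (nuD mD).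
Proof.
move=> [fin rad]; split.
  rewrite nuDE; apply: le_lt_trans fin; apply: le_measure => //; rewrite inE //.
  by apply: measurableI => //; apply: mpre.
move=> S mS e e0.
have mP : measurable (fhom hphi @^-1` S `&` D : set (bstone x0)) by apply: measurableI => //; apply: mpre.
have [K' [cK' sK' le]] := rad _ mP e e0.
have cK : compact (fhom hphi @` K' : set (pstone xA)).
  apply: continuous_compact => //.
  apply: continuous_subspaceT => x; exact: fhom_continuous.
exists (fhom hphi @` K'); split => //.
  by move=> _ [y /sK' [Sy _] <-].
rewrite nuDE; apply: le_trans le _; rewrite leeD2r //.
apply: le_measure; rewrite ?inE.
- exact: compact_measurable_stone.
- by apply: measurableI => //; apply: mpre; exact: compact_measurable_stone.
- by move=> y K'y; split; [exists y|case: (sK' _ K'y)].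
Qed.

End Radon.

Module P5M.
From mathcomp Require Import finmap.
Import Order.Theory GRing.Theory Num.Theory.
Import numFieldNormedType.Exports.
Local Open Scope classical_set_scope.
Local Open Scope ring_scope.
Set Implicit Arguments.

Section Int.
Context d (T : measurableType d) (R : realType).

Lemma int_bd (m : {measure set T -> \bar R}) (f : T -> R) (M : R) :
  (m setT < +oo)%E -> measurable_fun setT f -> (forall x, `|f x| <= M) ->
  m.-integrable setT (EFin \o f).
Proof.
move=> fin mf hM; apply: measurable_bounded_integrable => //.
exists M; split; first by rewrite num_real.
move=> y My x _; apply: le_trans (hM x) _; exact: ltW.
Qed.

Lemma Rint_indic (m : {measure set T -> \bar R}) (X : set T) : measurable X ->
  Rintegral m setT (\1_X) = fine (m X).
Proof. by move=> mX; rewrite /Rintegral integral_indic // setIT. Qed.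

End Int.

Section Step.
Context {d : Order.disp_t} (A : ctbDistrLatticeType d) (R : realType).

Fixpoint hstep (s : seq (A * R)) (x : stone A) : R :=
  if s is p :: s' then (if `[< uf x p.1 >] then p.2 else hstep s' x) else 0.

Lemma indic_sclopen (a : A) x : \1_(sclopen a) x = (if `[< uf x a >] then 1 else 0 : R).
Proof.
rewrite indicE; case: asboolP => h.
  by rewrite mem_set.
by rewrite memNset.
Qed.

Lemma hstep_cons (e : A) p s x :
  \1_(sclopen e) x * hstep (p :: s) x =
  p.2 * \1_(sclopen (Order.meet e p.1)) x +
  \1_(sclopen (Order.meet e (Order.compl p.1))) x * hstep s x.
Proof.
rewrite /= !indic_sclopen.
case: (asboolP (uf x e)) => he; case: (asboolP (uf x p.1)) => hp.
- rewrite asboolT; last by apply/uf_meet.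
  rewrite asboolF; last by move/uf_meet => [_ /uf_compl].
  by rewrite mul1r mulr1 mul0r addr0.
- rewrite asboolF; last by move/uf_meet => [].
  rewrite asboolT; last by apply/uf_meet; split => //; apply/uf_compl.
  by rewrite !mul1r mulr0 add0r.
- rewrite asboolF; last by move/uf_meet => [].
  rewrite asboolF; last by move/uf_meet => [].
  by rewrite !mul0r mulr0 addr0.
- rewrite asboolF; last by move/uf_meet => [].
  rewrite asboolF; last by move/uf_meet => [].
  by rewrite !mul0r mulr0 addr0.
Qed.

Lemma hstep_bound s x : `|hstep s x| <= \sum_(p <- s) `|p.2|.
Proof.
elim: s => [|p s IH] /=; first by rewrite big_nil normr0.
rewrite big_cons; case: asboolP => _.
  by rewrite lerDl sumr_ge0.
by apply: le_trans IH _; rewrite lerDr.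
Qed.

Lemma hstep_approx (g : stone A -> R) (e : R) s x :
  (forall p, p \in s -> forall y, uf y p.1 -> `|g y - p.2| <= e) ->
  (exists2 p, p \in s & uf x p.1) ->
  `|g x - hstep s x| <= e.
Proof.
elim: s => [|p s IH] /= hs [q]; first by rewrite in_nil.
rewrite in_cons => /orP [/eqP -> xq|qs xq].
  rewrite asboolT //; apply: hs xq; exact: mem_head.
case: asboolP => xp.
  by apply: hs xp; exact: mem_head.
apply: IH; last by exists q.
by move=> r rs; apply: hs; rewrite in_cons rs orbT.
Qed.

End Step.
Arguments hstep {d A R} s x.
Arguments hstep_cons {d A R} e p s x.
Arguments hstep_bound {d A R} s x.

Section WS.
Context {d : Order.disp_t} (A : ctbDistrLatticeType d) (R : realType) (xA : stone A).
Local Notation T := (bstone xA).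

Lemma msclopen (a : A) : measurable (sclopen a : set T).
Proof. apply: sub_sigma_algebra; exact: open_sclopen. Qed.

Lemma indic_top (x : stone A) : \1_(sclopen (Order.top : A)) x = 1 :> R.
Proof. by rewrite sclopenT indicE mem_set. Qed.

Lemma hstep_cons1 p s (x : stone A) :
  hstep (p :: s) x = p.2 * \1_(sclopen p.1) x + \1_(sclopen (Order.compl p.1)) x * hstep s x :> R.
Proof. by have := hstep_cons Order.top p s x; rewrite indic_top mul1r !meet1x. Qed.

Lemma mhstep (s : seq (A * R)) : measurable_fun (T := T) (U := R) setT (hstep s).
Proof.
elim: s => [|p s IH]; first exact: measurable_cst.
rewrite (_ : hstep _ = fun x => p.2 * \1_(sclopen p.1) x +
   \1_(sclopen (Order.compl p.1)) x * hstep s x); last first.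
  by apply/funext => x; rewrite hstep_cons1.
apply: measurable_funD.
  apply: measurable_funM; first exact: measurable_cst.
  by apply: measurable_indic; exact: msclopen.
by apply: measurable_funM => //; by apply: measurable_indic; exact: msclopen.
Qed.


Lemma indic_sclopen_le1 (e : A) x : `|\1_(sclopen e) x| <= 1 :> R.
Proof. by rewrite indic_sclopen; case: asboolP; rewrite ?normr1 ?normr0. Qed.

Section Cvg.
Variables (m : {measure set T -> \bar R}) (M : R).
Hypothesis hm : (m setT <= M%:E)%E.

Lemma fin_m : (m setT < +oo)%E.
Proof. by apply: le_lt_trans hm _; exact: ltry. Qed.

Lemma int_hs (e : A) (s : seq (A * R)) :
  m.-integrable setT (EFin \o (fun x : T => \1_(sclopen e) x * hstep s x)).
Proof.
apply: (@int_bd _ _ _ m _ (\sum_(p <- s) `|p.2|)); first exact: fin_m.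
  apply: measurable_funM; last exact: mhstep.
  by apply: measurable_indic; exact: msclopen.
move=> x; rewrite normrM; apply: le_trans (hstep_bound s x).
by rewrite ler_piMl // indic_sclopen_le1.
Qed.

Lemma int_ci (c : R) (e : A) :
  m.-integrable setT (EFin \o (fun x : T => \1_(sclopen e) x)).
Proof.
apply: (@int_bd _ _ _ m _ 1); first exact: fin_m.
  by apply: measurable_indic; exact: msclopen.
by move=> x; exact: indic_sclopen_le1.
Qed.

Lemma Rint_cons (e : A) p s :
  Rintegral m setT (fun x : T => \1_(sclopen e) x * hstep (p :: s) x) =
  p.2 * fine (m (sclopen (Order.meet e p.1))) +
  Rintegral m setT (fun x : T => \1_(sclopen (Order.meet e (Order.compl p.1))) x * hstep s x).
Proof.
under eq_Rintegral do rewrite hstep_cons.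
rewrite RintegralD //; last exact: int_hs.
  rewrite RintegralZl //; last exact: int_ci.
  by rewrite Rint_indic //; exact: msclopen.
apply: (@int_bd _ _ _ m _ `|p.2|); first exact: fin_m.
  apply: measurable_funM; first exact: measurable_cst.
  by apply: measurable_indic; exact: msclopen.
by move=> x; rewrite normrM ler_piMr // indic_sclopen_le1.
Qed.

Lemma Rint_nil (e : A) :
  Rintegral m setT (fun x : T => \1_(sclopen e) x * hstep [::] x) = 0.
Proof.
under eq_Rintegral do rewrite /= mulr0.
by rewrite Rintegral_cst // mul0r.
Qed.

End Cvg.

Variables (nus : nat -> {measure set T -> \bar R}) (nu : {measure set T -> \bar R}) (M : R).
Hypotheses (hM : forall n, (nus n setT <= M%:E)%E) (hM' : (nu setT <= M%:E)%E)
  (hcl : forall a, (fun n => fine (nus n (sclopen a))) @ \oo --> fine (nu (sclopen a))).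

Lemma cvg_hs s : forall e : A,
  (fun n => Rintegral (nus n) setT (fun x : T => \1_(sclopen e) x * hstep s x)) @ \oo -->
  Rintegral nu setT (fun x : T => \1_(sclopen e) x * hstep s x).
Proof.
elim: s => [|p s IH] e.
  rewrite Rint_nil; under eq_fun do rewrite Rint_nil; exact: cvg_cst.
rewrite (Rint_cons nu M hM'); under eq_fun do rewrite (Rint_cons _ _ (hM _)).
apply: cvgD; last exact: IH.
by apply: cvgMr; exact: hcl.
Qed.


Lemma approx (g : pstone xA -> R) : continuous g -> forall e : R, 0 < e ->
  exists s : seq (A * R), forall x, `|g x - hstep s x| <= e.
Proof.
move=> cg e e0.
have H : forall y : stone A, exists a, uf y a /\ (forall z, uf z a -> `|g z - g y| <= e).
  move=> y; have : nbhs y (g @^-1` ball (g y) e).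
    by apply: cg; apply: nbhsx_ballx.
  rewrite nbhsE => -[V [oV Vy] Vs].
  have [a [ya aV]] := @open_stoneP _ A V oV y Vy.
  exists a; split => // z za; have := Vs z (aV z za).
  by rewrite /ball /= distrC => /ltW.
have [ay hay] := choice H.
have cc : cover_compact [set: pstone xA].
  by rewrite -(compact_cover (pstone xA)); exact: stone_compact.
have := cc (stone A) setT (fun y => sclopen (ay y)); case.
- by move=> i _; exact: open_sclopen.
- by move=> x _; exists x => //; exact: (hay x).1.
move=> D' _ cov.
exists [seq (ay y, g y) | y <- D'] => x; apply: hstep_approx.
  by move=> p /mapP [y yD ->] z /= zay; exact: (hay y).2.
have [y D'y xy] := cov x I.
by exists (ay y, g y) => //; apply/mapP; exists y.
Qed.

Lemma mcont (g : pstone xA -> R) : continuous g -> measurable_fun (T := T) (U := R) setT g.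
Proof.
move=> /continuousP cg; apply: (measurability _ (RGenOpens.measurableE R)).
move=> _ [_ [a [b ->] <-]]; apply: sub_sigma_algebra; rewrite setTI.
by apply: cg; exact: interval_open.
Qed.

Section Main.
Variables (g : pstone xA -> R) (cg : continuous g) (e : R) (s : seq (A * R)).
Hypothesis hs : forall x, `|g x - hstep s x| <= e.

Lemma int_g (m : {measure set T -> \bar R}) (Mm : R) : (m setT <= Mm%:E)%E ->
  m.-integrable setT (EFin \o (g : T -> R)).
Proof.
move=> hm; apply: (@int_bd _ _ _ m _ (e + \sum_(p <- s) `|p.2|)).
- exact: (le_lt_trans hm (ltry _)).
- exact: mcont.
move=> x; rewrite -[g x](subrK (hstep s x)).
by apply: le_trans (ler_normD _ _) _; apply: lerD => //; exact: hstep_bound.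
Qed.

Lemma int_h (m : {measure set T -> \bar R}) (Mm : R) : (m setT <= Mm%:E)%E ->
  m.-integrable setT (EFin \o (hstep s : T -> R)).
Proof.
move=> hm; apply: (@int_bd _ _ _ m _ (\sum_(p <- s) `|p.2|)).
- exact: (le_lt_trans hm (ltry _)).
- exact: mhstep.
by move=> x; exact: hstep_bound.
Qed.

Lemma diff_bd (m : {measure set T -> \bar R}) (Mm : R) : (m setT <= Mm%:E)%E ->
  0 <= e ->
  `|Rintegral m setT g - Rintegral m setT (hstep s)| <= e * Mm.
Proof.
move=> hm e0; rewrite -RintegralB //; [|exact: int_g hm|exact: int_h hm].
apply: le_trans (le_normr_Rintegral _ _) _ => //.
  apply: (@int_bd _ _ _ m _ e); first exact: (le_lt_trans hm (ltry _)).
    apply: measurable_funB; [exact: mcont|exact: mhstep].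
  by [].
apply: le_trans (_ : Rintegral m setT (fun _ => e) <= _).
  apply: le_Rintegral => //.
  - apply: (@int_bd _ _ _ m _ e); first exact: (le_lt_trans hm (ltry _)).
      apply: measurableT_comp => //; apply: measurable_funB; [exact: mcont|exact: mhstep].
    by move=> x; rewrite normr_id.
  - apply: (@int_bd _ _ _ m _ `|e|); first exact: (le_lt_trans hm (ltry _)).
      exact: measurable_cst.
    by [].
rewrite Rintegral_cst // ler_wpM2l //.
have mfin : m setT \is a fin_num.
  by rewrite ge0_fin_numE ?measure_ge0 //; exact: (le_lt_trans hm (ltry _)).
by rewrite -lee_fin fineK.
Qed.

End Main.

Lemma ws_main (g : pstone xA -> R) : continuous g ->
  (fun n => Rintegral (nus n) setT g) @ \oo --> Rintegral nu setT g.
Proof.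
move=> cg.
have M0 : 0 <= M.
  by rewrite -lee_fin; apply: le_trans hM'; exact: measure_ge0.
apply/cvgrPdist_le => eps eps0.
pose e := eps / (3 * (M + 1)).
have e0 : 0 < e by rewrite divr_gt0 // mulr_gt0 // ltr_wpDl.
have eM : e * M <= eps / 3.
  have M1 : M + 1 != 0 by rewrite gt_eqF // ltr_wpDl.
  have -> : e * M = eps / 3 * (M / (M + 1)) by rewrite /e; field.
  rewrite ler_piMr ?divr_ge0 ?ltW //.
  by rewrite ltr_pdivrMr ?ltr_wpDl // mul1r ltrDl ltr01.

have [s hs] := approx cg _ e0.
have ch := cvg_hs s Order.top.
have ch' : (fun n => Rintegral (nus n) setT (hstep s)) @ \oo --> Rintegral nu setT (hstep s).
  move: ch; rewrite (_ : (fun x : T => \1_(sclopen Order.top) x * hstep s x) = hstep s) //.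
  by apply/funext => x; rewrite indic_top mul1r.
move/cvgrPdist_le : ch' => /(_ (eps / 3) (divr_gt0 eps0 _)) ch'.
have three : (0:R) < 3 by rewrite ltr0n.
have {ch'} := ch' three.
apply: filterS => n hn.
have d1 := diff_bd cg e s hs nu M hM' (ltW e0).
have d2 := diff_bd cg e s hs (nus n) M (hM n) (ltW e0).
rewrite -[Rintegral nu _ g](subrK (Rintegral nu setT (hstep s))).
rewrite -[Rintegral (nus n) _ g](subrK (Rintegral (nus n) setT (hstep s))).
set a := Rintegral nu _ g; set b := Rintegral nu _ (hstep s).
set c := Rintegral (nus n) _ g; set d' := Rintegral (nus n) _ (hstep s).
have -> : a - b + b - (c - d' + d') = (a - b) + (b - d') - (c - d') by ring.
apply: le_trans (ler_normB _ _) _; apply: le_trans (lerD (ler_normD _ _) (lexx _)) _.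
have -> : eps = eps / 3 + eps / 3 + eps / 3 by field.
apply: lerD; [apply: lerD|].
- exact: le_trans d1 eM.
- exact: hn.
- exact: le_trans d2 eM.
Qed.

End WS.

End P5M.
Import P5M.
Import Order.Theory GRing.Theory Num.Theory.
Import numFieldNormedType.Exports.
Local Open Scope classical_set_scope.
Local Open Scope ring_scope.
Set Implicit Arguments.

Section TV.
Context d (T : measurableType d) (R : realType).

Lemma fin_le (m : {measure set T -> \bar R}) X : (m setT < +oo)%E -> measurable X ->
  m X \is a fin_num.
Proof.
move=> fin mX; rewrite ge0_fin_numE ?measure_ge0 //.
by apply: le_lt_trans fin; apply: le_measure; rewrite ?inE.
Qed.

Lemma sum_fine_le (m : {measure set T -> \bar R}) k (F : nat -> set T) :
  (m setT < +oo)%E -> (forall i, measurable (F i)) ->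
  (forall i j, (i < k)%N -> (j < k)%N -> i <> j -> F i `&` F j = set0) ->
  \sum_(i < k) fine (m (F i)) <= fine (m setT).
Proof.
move=> fin mF dF; rewrite -lee_fin -sumEFin.
under eq_bigr do rewrite fineK ?fin_le //.
rewrite fineK ?fin_le // -measure_semi_additive_ord_I //.
- by apply: le_measure; rewrite ?inE //; apply: bigsetU_measurable.
- rewrite /trivIset => i j ik jk [x Fx]; apply: contrapT => ij.
  by have := dF i j ik jk ij; move/seteqP => [+ _] => /(_ x Fx).
- by apply: bigsetU_measurable.
Qed.

End TV.

Section Phi.
Context {dA : Order.disp_t} (A : ctbDistrLatticeType dA) (xA : stone A) (R : realType).
Local Notation T := (bstone xA).

Lemma tv_ge (nu : set T -> R) (S : set T) : measurable S -> signed_radon nu ->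
  `|nu S| <= 1 * Defs.total_variation nu.
Proof.
move=> mS [m1 [m2 [[f1 _] [f2 _] ->]]].
rewrite mul1r; apply: ub_le_sup.
  exists (fine (m1 setT) + fine (m2 setT)) => r [k [F [mF dF ->]]].
  apply: le_trans (_ : \sum_(i < k) (fine (m1 (F i)) + fine (m2 (F i))) <= _).
    apply: ler_sum => i _; rewrite /sdiff_meas.
    apply: le_trans (ler_normB _ _) _.
    by rewrite !ger0_norm // fine_ge0 // measure_ge0.
  by rewrite big_split; apply: lerD; apply: sum_fine_le.
exists 1%N, (fun _ => S); split => //.
  by move=> i j; rewrite !ltnS !leqn0 => /eqP -> /eqP ->.
by rewrite big_ord1.
Qed.

Lemma Phi_blf (S : set T) : measurable S ->
  bounded_linear_functional (fun nu : set T -> R => nu S).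
Proof.
move=> mS; split => //.
by exists 1 => nu hnu; exact: tv_ge.
Qed.

End Phi.

Import Order.Theory GRing.Theory Num.Theory.
Import numFieldNormedType.Exports.
Local Open Scope classical_set_scope.
Local Open Scope ring_scope.
Set Implicit Arguments.

Section FineMeas.
Context d (T : measurableType d) (R : realType) (m : {measure set T -> \bar R}).
Hypothesis fin : (m setT < +oo)%E.

Lemma fine_le X Y : measurable X -> measurable Y -> X `<=` Y -> fine (m X) <= fine (m Y).
Proof.
move=> mX mY XY; rewrite -lee_fin !fineK ?fin_le //.
by apply: le_measure; rewrite ?inE.
Qed.

Lemma fine_subU X Y : measurable X -> measurable Y ->
  fine (m (X `|` Y)) <= fine (m X) + fine (m Y).
Proof.
move=> mX mY; rewrite -lee_fin EFinD !fineK ?fin_le //; last exact: measurableU.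
exact: measureU2.
Qed.

Lemma fine_disjU X Y : measurable X -> measurable Y -> X `&` Y = set0 ->
  fine (m (X `|` Y)) = fine (m X) + fine (m Y).
Proof.
move=> mX mY XY; rewrite measureU // fineD // fin_le //.
Qed.

Lemma diff_le X Y D : measurable X -> measurable Y -> measurable D ->
  `|fine (m (Y `&` D)) - fine (m (X `&` D))| <= fine (m ((X `\` Y) `|` (Y `\` X))).
Proof.
move=> mX mY mD.
have mS : measurable ((X `\` Y) `|` (Y `\` X)) by apply: measurableU; apply: measurableD.
have h1 : fine (m (X `&` D)) <= fine (m (Y `&` D)) + fine (m ((X `\` Y) `|` (Y `\` X))).
  apply: (le_trans _ (fine_subU _ _ (measurableI _ _ mY mD) mS)).
  apply: fine_le; [exact: measurableI|apply: measurableU => //; exact: measurableI|].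
  by move=> x [Xx Dx]; have [Yx|nYx] := pselect (Y x); [left|right; left].
have h2 : fine (m (Y `&` D)) <= fine (m (X `&` D)) + fine (m ((X `\` Y) `|` (Y `\` X))).
  apply: (le_trans _ (fine_subU _ _ (measurableI _ _ mX mD) mS)).
  apply: fine_le; [exact: measurableI|apply: measurableU => //; exact: measurableI|].
  by move=> x [Yx Dx]; have [Xx|nXx] := pselect (X x); [left|right; right].
rewrite ler_norml; apply/andP; split; lra.
Qed.

Lemma sym_fine X Y : measurable X -> measurable Y ->
  fine (m ((X `\` Y) `|` (Y `\` X))) = fine (m X) + fine (m Y) - 2 * fine (m (X `&` Y)).
Proof.
move=> mX mY.
have eX : X = (X `\` Y) `|` (X `&` Y).
  by apply/seteqP; split => x; [move=> Xx; have [?|?] := pselect (Y x); [right|left]|case=> -[]].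
have eY : Y = (Y `\` X) `|` (X `&` Y).
  by apply/seteqP; split => x; [move=> Yx; have [?|?] := pselect (X x); [right|left]|case=> -[]].
have d1 : (X `\` Y) `&` (X `&` Y) = set0.
  by apply/seteqP; split => x // -[[]] _ + [].
have d2 : (Y `\` X) `&` (X `&` Y) = set0.
  by apply/seteqP; split => x // -[[]] _ + [].
have d3 : (X `\` Y) `&` (Y `\` X) = set0.
  by apply/seteqP; split => x // -[[]] _ + [].
have hX : fine (m X) = fine (m (X `\` Y)) + fine (m (X `&` Y)).
  by rewrite {1}eX fine_disjU //; [exact: measurableD|exact: measurableI].
have hY : fine (m Y) = fine (m (Y `\` X)) + fine (m (X `&` Y)).
  by rewrite {1}eY fine_disjU //; [exact: measurableD|exact: measurableI].
rewrite fine_disjU //; [|exact: measurableD|exact: measurableD].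
rewrite hX hY; ring.
Qed.

End FineMeas.

Unset Implicit Arguments.
Import Order.TTheory GRing.Theory Num.Theory.
Import numFieldNormedType.Exports.
Local Open Scope classical_set_scope.
Local Open Scope ring_scope.

Lemma mzero_radon {d} (A : ctbDistrLatticeType d) (xA : stone A) (R : realType) :
  finite_radon (@mzero _ (bstone xA) R).
Proof.
split; first exact: ltry.
move=> B mB e e0; exists set0; split => //; first exact: compact0.
by rewrite /mzero add0e lee_fin ltW.
Qed.

Lemma sint0 {d} (A : ctbDistrLatticeType d) (xA : stone A) (R : realType)
  (m : {measure set bstone xA -> \bar R}) (f : pstone xA -> R) :
  Defs.sintegral m mzero f = Rintegral m setT f.
Proof. by rewrite /Defs.sintegral integral_measure_zero /= subr0. Qed.

Unset Implicit Arguments.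
Import Order.TTheory GRing.Theory Num.Theory.
Local Open Scope classical_set_scope.
Local Open Scope ring_scope.

Theorem corollary5p5 {dA dB : Order.disp_t}
  (A : ctbDistrLatticeType dA) (B : ctbDistrLatticeType dB)
  (R : realType) (mu : B -> R)
  (phis : nat -> A -> B) (phi : A -> B) :
  grothendieck R A ->
  metric_BA mu ->
  (forall n, bool_hom (phis n)) -> bool_hom phi ->
  pointwise_metric_cvg mu phis phi ->
  (* for the Radon extension mu_hat of mu to St(B) *)
  forall (x0 : stone B) (muhat : {measure set bstone x0 -> \bar R}),
    finite_radon muhat ->
    (forall b : B, muhat (sclopen b) = (mu b)%:E) ->
  forall S : set (stone A), borel_stone S ->
    (fun n => muhat ((fphi_preimage (phis n) S `\` fphi_preimage phi S)
                     `|` (fphi_preimage phi S `\` fphi_preimage (phis n) S)))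
      @ \oo --> 0%E.
Proof.
move=> G hmu hphis hphi pmc x0 muhat rad hmh S bS.
have fin : (muhat setT < +oo)%E := rad.1.
pose xA := fhom hphi x0.
have mS : measurable (S : set (bstone xA)) := bS.
rewrite (fphi_preimageE hphi); under eq_fun do rewrite (fphi_preimageE (hphis _)).
set P := fhom hphi @^-1` S.
have mP : measurable (P : set (bstone x0)) := mpre hphi mS.
have mPn n : measurable (fhom (hphis n) @^-1` S : set (bstone x0)) := mpre (hphis n) mS.
have hcl : forall D : set (bstone x0), measurable D -> forall a : A,
   (fun n => fine (muhat (sclopen (phis n a) `&` D))) @ \oo -->
   fine (muhat (sclopen (phi a) `&` D)).
  move=> D mD a; apply/cvgrPdist_le => eps eps0.
  have := pmc a; move/cvgrPdist_le => /(_ eps eps0).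
  apply: filterS => n hn.
  apply: le_trans (diff_le muhat fin _ _ _ (msclopen (xA := x0) _) (msclopen (xA := x0) _) mD) _.
  rewrite -sclopen_symdiff hmh /=.
  by move: hn; rewrite sub0r normrN; apply: le_trans; exact: ler_norm.
have key : forall D (mD : measurable (D : set (bstone x0))),
    (fun n => fine (muhat (fhom (hphis n) @^-1` S `&` D))) @ \oo --> fine (muhat (P `&` D)).
  move=> D mD.
  have hM : forall n, (nuD xA muhat (hphis n) mD setT <= (fine (muhat setT))%:E)%E.
    move=> n; rewrite fineK ?fin_le // nuDE; apply: le_measure; rewrite ?inE //.
    by apply: measurableI => //; exact: mpre.
  have hM' : (nuD xA muhat hphi mD setT <= (fine (muhat setT))%:E)%E.
    rewrite fineK ?fin_le // nuDE; apply: le_measure; rewrite ?inE //.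
    by apply: measurableI => //; exact: mpre.
  have ws := ws_main (fun n => nuD xA muhat (hphis n) mD) (nuD xA muhat hphi mD) _ hM hM'
    (fun a => hcl D mD a).
  have wc := G xA (fun n => nuD xA muhat (hphis n) mD) (fun _ => mzero)
    (nuD xA muhat hphi mD) mzero (fun n => nuD_radon xA (hphis n) mD rad)
    (fun _ => mzero_radon _ _ _) (nuD_radon xA hphi mD rad) (mzero_radon _ _ _).
  have wc2 : weak_cvg (fun n => nuD xA muhat (hphis n) mD) (fun _ => mzero)
      (nuD xA muhat hphi mD) mzero.
    apply: wc => g cg; rewrite sint0.
    under eq_fun do rewrite sint0.
    exact: ws g cg.
  have := wc2 _ (Phi_blf R mS).
  rewrite /sdiff_meas /mzero /= subr0.
  by under eq_fun do rewrite subr0.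
apply/fine_cvgP; split.
  by apply: nearW => n; apply: fin_le => //; apply: measurableU; apply: measurableD.
rewrite (_ : _ \o _ = fun n => fine (muhat (fhom (hphis n) @^-1` S)) + fine (muhat P)
   - 2 * fine (muhat (fhom (hphis n) @^-1` S `&` P))); last first.
  by apply/funext => n /=; rewrite sym_fine.
have k1 := key setT measurableT.
have k2 := key P mP.
rewrite setIid in k2.
under [X in X @ _ --> _]eq_fun do rewrite -[fhom (hphis _) @^-1` S]setIT.
have -> : 0 = fine (muhat (P `&` setT)) + fine (muhat P) - 2 * fine (muhat P).
  by rewrite setIT; ring.
apply: cvgB; first by apply: cvgD => //; exact: cvg_cst.
apply: cvgMr; under eq_fun do rewrite setIT.
exact: k2.
Qed.
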